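(* Let $n=2m+1$ be odd, and let $\mathbf{V}=\{V_{rj}\}$, $V_j$ and $V$ be as described in the context. Let $M$ be uniform on $\{m,m+1\}$, independent of $\mathbf{V}$. For $i\in\{1,\dots,n\}$, given $\mathbf{V}$ and $M$, let $F^i\in\{0,1\}$ satisfy $P(F^i=1\mid\mathbf{V},M)=\frac{1}{m+1}\mathbf{1}(\mathbf{V}^{M,i}\text{ is feasible})$, and let $J^i$ be uniform on $\{j:V_{Mj}\ne V_{Mi}\}$. Define $$\mathbf{V}^i=\begin{cases}\mathbf{V}&V_i=1\\ \mathbf{V}^{M,i}&V_i=0,\ F^i=1\\ \mathbf{V}^{M,i,J^i}&V_i=0,\ F^i=0.\end{cases}$$ Then $\mathcal{L}(\mathbf{V}^i)=\mathcal{L}(\mathbf{V}\mid V_i=1)$. Further, let $V^i=\sum_{j=1}^nV^i_j$ with $V^i_j=(\sum_{r=1}^nV^i_{rj})\bmod 2$, and let $I$ be uniform on $\{1,\dots,n\}$, independent of all other variables. Then $V^s=V^I$ has the $V$-size bias distribution and, writing $F=F^I$, $J=J^I$, $$V^s-V=\mathbf{1}_{\{V_I=0,F=1\}}+2\,\mathbf{1}_{\{V_I=0,\,V_J=0,\,F=0\}}\quad\text{and}\quad V\le V^s\le V+2.$$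
   Context: Standard lightbulb process: $n$ bulbs, all initially off, $n$ stages; at stage $r$ a uniformly random subset of exactly $r$ bulbs is toggled, independently across stages; switch variables $X_{rj}\in\{0,1\}$ ($1$ iff bulb $j$ toggled at stage $r$). Construction of $\mathbf{V}$ for $n=2m+1$: given $\mathbf{X}$, let $B_m$ be uniform on $\{j:X_{mj}=0\}$ and $B_{m+1}$ uniform on $\{j:X_{m+1,j}=1\}$; let $C_m,C_{m+1}$ be independent symmetric Bernoulli variables independent of $\mathbf{X},B_m,B_{m+1}$; set $V_{rj}=X_{rj}$ except $V_{m,B_m}=C_m$ and $V_{m+1,B_{m+1}}=C_{m+1}$; $V_j=(\sum_rV_{rj})\bmod2$, $V=\sum_jV_j$. A $\{0,1\}$-array $\mathbf{e}=\{e_{rj}\}_{r,j=1}^n$ is feasible if $\sum_je_{rj}=r$ for $r\notin\{m,m+1\}$ and $\sum_je_{rj}\in\{m,m+1\}$ for $r\in\{m,m+1\}$. For $r\in\{m,m+1\}$ and $i,j$: $\mathbf{e}^{r,i}$ equals $\mathbf{e}$ except that entry $(r,i)$ is replaced by $1-e_{ri}$; $\mathbf{e}^{r,i,j}$ equals $\mathbf{e}$ with the entries in positions $(r,i)$ and $(r,j)$ interchanged. $\mathbf{V}^{M,i}$, $\mathbf{V}^{M,i,j}$ are defined likewise from $\mathbf{V}$. $V^s$ has the $V$-size bias distribution if $E[Vg(V)]=E[V]E[g(V^s)]$ for all bounded continuous $g$. *)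

(* Defs.v *)
From mathcomp Require Import all_boot all_order all_algebra.
Set Implicit Arguments. Unset Strict Implicit. Unset Printing Implicit Defensive.
Import Order.TTheory GRing.Theory Num.Theory.
Local Open Scope ring_scope.

Definition nbulbs (m : nat) : nat := (m.*2).+1.

(* A {0,1}-array e = {e_{rj}}: the entry for stage r+1 and bulb j+1 is
   e (r, j), with r j : 'I_n (0-based indices). *)
Definition arr (m : nat) := {ffun 'I_(nbulbs m) * 'I_(nbulbs m) -> bool}.

Definition rowsum (m : nat) (e : arr m) (r : 'I_(nbulbs m)) : nat :=
  (\sum_(j < nbulbs m) e (r, j))%N.

(* 0-based row index of stage m (= m-1) and of stage m+1 (= m). *)
Definition row_m (m : nat) : 'I_(nbulbs m) := inord m.-1.
Definition row_m1 (m : nat) : 'I_(nbulbs m) := inord m.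

(* The stage M in {m, m+1} is encoded by a boolean b : M = m + b;
   its 0-based row index. *)
Definition rowM (m : nat) (b : bool) : 'I_(nbulbs m) :=
  if b then row_m1 m else row_m m.

Definition feasible (m : nat) (e : arr m) : bool :=
  [forall r : 'I_(nbulbs m),
     if (r.+1 == m)%N || (r.+1 == m.+1)%N
     then (rowsum e r == m)%N || (rowsum e r == m.+1)%N
     else (rowsum e r == r.+1)%N].

Definition flip (m : nat) (e : arr m) (r i : 'I_(nbulbs m)) : arr m :=
  [ffun p => if p == (r, i) then ~~ e (r, i) else e p].

Definition swap (m : nat) (e : arr m) (r i j : 'I_(nbulbs m)) : arr m :=
  [ffun p => if p == (r, i) then e (r, j)
             else if p == (r, j) then e (r, i) else e p].

Definition colpar (m : nat) (e : arr m) (j : 'I_(nbulbs m)) : bool :=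
  odd (\sum_(r < nbulbs m) e (r, j)).

Definition Vtot (m : nat) (e : arr m) : nat :=
  (\sum_(j < nbulbs m) colpar e j)%N.

Section Laws.
Variable R : realFieldType.
Variable m : nat.
Local Notation n := (nbulbs m).

(* Law of the switch array X: independent stages, stage r+1 toggles a uniform
   subset of exactly r+1 bulbs. *)
Definition pX (x : arr m) : R :=
  \prod_(r < n) ((rowsum x r == r.+1)%N%:R / ('C(n, r.+1))%:R).

(* V built from X, B_m, C_m, B_{m+1}, C_{m+1} *)
Definition mkV (x : arr m) (bm : 'I_n) (cm : bool) (bm1 : 'I_n) (cm1 : bool)
  : arr m :=
  [ffun p => if p == (row_m m, bm) then cm
             else if p == (row_m1 m, bm1) then cm1 else x p].

Definition pBm (x : arr m) (j : 'I_n) : R :=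
  (~~ x (row_m m, j))%:R / #|[set k | ~~ x (row_m m, k)]|%:R.

Definition pBm1 (x : arr m) (j : 'I_n) : R :=
  (x (row_m1 m, j))%:R / #|[set k | x (row_m1 m, k)]|%:R.

(* Law of V (marginal of the construction; C_m, C_{m+1} fair coins). *)
Definition pV (v : arr m) : R :=
  \sum_(x : arr m) \sum_(bm : 'I_n) \sum_(bm1 : 'I_n)
   \sum_(cm : bool) \sum_(cm1 : bool)
     pX x * pBm x bm * pBm1 x bm1 * (2^-1 * 2^-1)
       * (v == mkV x bm cm bm1 cm1)%:R.

Definition pF (i : 'I_n) (v : arr m) (b : bool) (f : bool) : R :=
  let q := (feasible (flip v (rowM m b) i))%:R / (m.+1)%:R in
  if f then q else 1 - q.

Definition pJ (i : 'I_n) (v : arr m) (b : bool) (j : 'I_n) : R :=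
  (v (rowM m b, j) != v (rowM m b, i))%:R
    / #|[set k | v (rowM m b, k) != v (rowM m b, i)]|%:R.

(* Joint law of (V, M, F^i, J^i): M uniform on {m, m+1} independent of V;
   given (V, M), F^i and J^i have the laws above (conditionally
   independent). *)
Definition pjoint (i : 'I_n) (v : arr m) (b : bool) (f : bool) (j : 'I_n) : R :=
  pV v * 2^-1 * pF i v b f * pJ i v b j.

End Laws.

Definition Vi (m : nat) (i : 'I_(nbulbs m)) (v : arr m) (b : bool) (f : bool)
  (j : 'I_(nbulbs m)) : arr m :=
  if colpar v i then v
  else if f then flip v (rowM m b) i
  else swap v (rowM m b) i j.

(* Main.v *)
Require Import Defs.
From mathcomp Require Import all_boot all_order all_algebra all_fingroup.
From mathcomp Require Import zify ring lra.
Import Order.TTheory GRing.Theory Num.Theory.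
Local Open Scope ring_scope.
Set Implicit Arguments. Unset Strict Implicit. Unset Printing Implicit Defensive.

Section Basics.
Variable m : nat.
Local Notation n := (nbulbs m).

Lemma val_row_m (hm : (0 < m)%N) : nat_of_ord (row_m m) = m.-1.
Proof. by rewrite /row_m inordK // /nbulbs; case: m hm => //= k _; lia. Qed.
Lemma val_row_m1 : nat_of_ord (row_m1 m) = m.
Proof. by rewrite /row_m1 inordK // /nbulbs; lia. Qed.
Lemma row_m_neq (hm : (0 < m)%N) : row_m m != row_m1 m.
Proof. apply/eqP => /(congr1 val) /=; rewrite val_row_m // val_row_m1; lia. Qed.

Definition special (r : 'I_n) := ((r.+1 == m) || (r.+1 == m.+1))%N.
Lemma special_rowM (hm : (0 < m)%N) b : special (rowM m b).
Proof.
rewrite /special /rowM; case: b; rewrite ?val_row_m // ?val_row_m1 ?eqxx ?orbT //.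
by rewrite prednK ?eqxx.
Qed.

Definition cond (r : 'I_n) (s : nat) : bool :=
  if special r then ((s == m) || (s == m.+1))%N else (s == r.+1)%N.

Lemma feasibleE (e : arr m) : feasible e = [forall r, cond r (rowsum e r)].
Proof. by []. Qed.

Lemma feas_row (w e : arr m) (M : 'I_n) : special M -> feasible w ->
  (forall r, r != M -> rowsum e r = rowsum w r) ->
  feasible e = ((rowsum e M == m) || (rowsum e M == m.+1))%N.
Proof.
move=> sM /forallP fw he; rewrite feasibleE; apply/forallP/idP => [/(_ M)|h r].
  by rewrite /cond sM.
case: (eqVneq r M) => [->|rM]; first by rewrite /cond sM.
by rewrite he //; apply: fw.
Qed.

Lemma flipE (e : arr m) r i p : flip e r i p = if p == (r, i) then ~~ e (r, i) else e p.
Proof. by rewrite ffunE. Qed.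
Lemma swapE (e : arr m) r i j p : swap e r i j p =
  if p == (r, i) then e (r, j) else if p == (r, j) then e (r, i) else e p.
Proof. by rewrite ffunE. Qed.

Lemma flipK (e : arr m) r i : flip (flip e r i) r i = e.
Proof.
apply/ffunP => p; rewrite !flipE eqxx negbK.
by case: eqP => // ->.
Qed.

Lemma swap_tperm (e : arr m) r i j k :
  swap e r i j (r, k) = e (r, tperm i j k).
Proof.
rewrite swapE !xpair_eqE eqxx /=.
case: tpermP => [->|->|/eqP ki /eqP kj]; rewrite ?eqxx //.
  by case: eqP => // ->.
by rewrite (negPf ki) (negPf kj).
Qed.

Lemma swap_other (e : arr m) r i j r' k : r' != r -> swap e r i j (r', k) = e (r', k).
Proof. by move=> h; rewrite swapE !xpair_eqE (negPf h). Qed.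
Lemma flip_other (e : arr m) r i r' k : r' != r -> flip e r i (r', k) = e (r', k).
Proof. by move=> h; rewrite flipE !xpair_eqE (negPf h). Qed.

Lemma swapK (e : arr m) r i j : swap (swap e r i j) r i j = e.
Proof.
apply/ffunP => -[r' k]; case: (eqVneq r' r) => [->|h].
  by rewrite !swap_tperm tpermK.
by rewrite !swap_other.
Qed.

Lemma rowsum_swap (e : arr m) r i j r' : rowsum (swap e r i j) r' = rowsum e r'.
Proof.
rewrite /rowsum; case: (eqVneq r' r) => [->|h].
  under eq_bigr do rewrite swap_tperm.
  by rewrite [RHS](reindex_inj (@perm_inj _ (tperm i j))).
by under eq_bigr do rewrite swap_other //.
Qed.

Lemma feasible_swap (e : arr m) r i j : feasible (swap e r i j) = feasible e.
Proof. by rewrite !feasibleE; under eq_forallb do rewrite rowsum_swap. Qed.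

Lemma rowsum_flip_other (e : arr m) r i r' : r' != r -> rowsum (flip e r i) r' = rowsum e r'.
Proof. by move=> h; rewrite /rowsum; under eq_bigr do rewrite flip_other //. Qed.

Lemma rowsum_flip (e : arr m) r i :
  (rowsum (flip e r i) r + e (r, i) = rowsum e r + ~~ e (r, i))%N.
Proof.
rewrite /rowsum (bigD1 i) //= [in RHS](bigD1 i) //= flipE eqxx.
under eq_bigr => k ki do rewrite flipE xpair_eqE eqxx (negPf ki).
by case: (e (r, i)) => /=; lia.
Qed.

Lemma colpar_flip (e : arr m) r i k :
  colpar (flip e r i) k = if k == i then ~~ colpar e k else colpar e k.
Proof.
rewrite /colpar (bigD1 r) //= [in RHS](bigD1 r) //= flipE xpair_eqE eqxx /=.
under eq_bigr => r' hr do rewrite flipE xpair_eqE (negPf hr) /=.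
case: eqP => [->|/eqP ki]; last by [].
by rewrite !oddD; case: (e (r, i)) => /=; rewrite ?negbK.
Qed.

Lemma colpar_swap (e : arr m) r i j k : i != j ->
  colpar (swap e r i j) k =
    if (k == i) || (k == j) then colpar e k (+) (e (r, i) != e (r, j)) else colpar e k.
Proof.
move=> ij.
rewrite /colpar (bigD1 r) //= [in RHS](bigD1 r) //= swap_tperm.
under eq_bigr => r' hr do rewrite swap_other //.
case: tpermP => [->|->|/eqP ki /eqP kj]; rewrite ?eqxx ?orbT /=.
- by rewrite ?oddD; case: (e (r, i)); case: (e (r, j)) => /=; rewrite ?addbT ?addbF ?negbK.
- by rewrite ?oddD; case: (e (r, i)); case: (e (r, j)) => /=; rewrite ?addbT ?addbF ?negbK.
by rewrite (negPf ki) (negPf kj).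
Qed.


Lemma Vtot_flip (e : arr m) r i : colpar e i = false -> Vtot (flip e r i) = (Vtot e).+1.
Proof.
move=> ci; rewrite /Vtot (bigD1 i) //= [in RHS](bigD1 i) //= colpar_flip eqxx ci.
by under eq_bigr => k ki do rewrite colpar_flip (negPf ki).
Qed.

Lemma Vtot_swap (e : arr m) r i j : i != j -> e (r, i) != e (r, j) ->
  colpar e i = false -> Vtot (swap e r i j) = (Vtot e + 2 * ~~ colpar e j)%N.
Proof.
move=> ij eij ci; rewrite /Vtot (bigD1 i) //= [in RHS](bigD1 i) //=.
rewrite (bigD1 j) //= 1?eq_sym // [in RHS](bigD1 j) //= 1?eq_sym //.
rewrite !colpar_swap // !eqxx ?orbT eij ci /=.
under eq_bigr => k /andP [ki kj] do rewrite colpar_swap // (negPf ki) (negPf kj) /=.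
by case: (colpar e j) => /=; lia.
Qed.

Lemma part3 (R : realFieldType) (i : 'I_n) (v : arr m) (b f : bool) (j : 'I_n) :
  pjoint R i v b f j != 0 ->
  [/\ Vtot (Vi i v b f j)
        = (Vtot v + (~~ colpar v i && f)
           + 2 * (~~ colpar v i && ~~ colpar v j && ~~ f))%N,
      (Vtot v <= Vtot (Vi i v b f j))%N
    & (Vtot (Vi i v b f j) <= Vtot v + 2)%N].
Proof.
rewrite /pjoint !mulf_eq0 !negb_or => /andP [_ hJ].
have hvj : v (rowM m b, j) != v (rowM m b, i).
  by apply/negP => /eqP e; move: hJ; rewrite /pJ e eqxx /= eqxx.
have ij : i != j by apply: contraNneq hvj => ->.
suff -> : Vtot (Vi i v b f j)
        = (Vtot v + (~~ colpar v i && f)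
           + 2 * (~~ colpar v i && ~~ colpar v j && ~~ f))%N.
  by split => //; case: (colpar v i); case: f; case: (colpar v j) => /=; lia.
rewrite /Vi; case ci: (colpar v i) => /=; first by lia.
case: f => /=; first by rewrite Vtot_flip //; lia.
by rewrite Vtot_swap // 1?eq_sym //; case: (colpar v j) => /=; lia.
Qed.

End Basics.

Lemma sum_card (T : finType) (P : pred T) : (\sum_(x : T) P x)%N = #|[set x | P x]|.
Proof.
rewrite -sum1_card [RHS]big_mkcond /=; apply: eq_bigr => x _; rewrite inE.
by case: (P x).
Qed.

Lemma sum_ind (R : pzSemiRingType) (T : finType) (P : pred T) :
  \sum_(x : T) (P x)%:R = #|[set x | P x]|%:R :> R.
Proof. by rewrite -natr_sum sum_card. Qed.

Lemma sum_eq1 (R : pzSemiRingType) (T : finType) (F : T -> R) (y : T) :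
  \sum_(x : T) F x * (x == y)%:R = F y.
Proof.
rewrite (bigD1 y) //= eqxx mulr1 big1 ?addr0 // => x /negPf ->.
by rewrite mulr0.
Qed.

Section Comb.
Variable m : nat.
Local Notation n := (nbulbs m).

Lemma card_neq (e : arr m) M c :
  #|[set k | e (M, k) != c]| = if c then (n - rowsum e M)%N else rowsum e M.
Proof.
rewrite /rowsum sum_card; case: c.
  have := cardC [set k | e (M, k)]; rewrite card_ord => h.
  transitivity #|[predC [set k | e (M, k)]]|; last by move: h; set a := #|_|; set b := #|_|; lia.
  by apply: eq_card => k; rewrite !inE; case: (e _).
by apply: eq_card => k; rewrite !inE; case: (e _).
Qed.

Lemma feas_rowsum (w : arr m) M : special M -> feasible w ->
  ((rowsum w M == m) || (rowsum w M == m.+1))%N.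
Proof. by move=> sM; rewrite feasibleE => /forallP /(_ M); rewrite /cond sM. Qed.

Lemma feas_flip (w e : arr m) M i : special M -> feasible w ->
  (forall r, rowsum e r = rowsum w r) ->
  feasible (flip e M i) = if e (M, i) then rowsum w M == m.+1 else rowsum w M == m.
Proof.
move=> sM fw he.
rewrite (feas_row sM fw) => [|r rM]; last by rewrite rowsum_flip_other // he.
have := rowsum_flip e M i; rewrite he.
have := feas_rowsum sM fw.
case: (e (M, i)) => /=; case/orP => /eqP ->; rewrite ?addn0 ?addn1 => h;
  apply/idP/idP; move/eqP: h; try lia; try (move=> <-; rewrite ?eqxx ?orbT //).
Qed.


Lemma flip_eq (v w : arr m) r i : (flip v r i == w) = (v == flip w r i).
Proof. by apply/eqP/eqP => [<-|->]; rewrite flipK. Qed.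
Lemma swap_eq (v w : arr m) r i j : (swap v r i j == w) = (v == swap w r i j).
Proof. by apply/eqP/eqP => [<-|->]; rewrite swapK. Qed.

Variable R : realFieldType.

Lemma Lb (hm : (0 < m)%N) i (w : arr m) b :
  \sum_(v : arr m) (feasible v && ~~ colpar v i)%:R *
   (pF R i v b true * (flip v (rowM m b) i == w)%:R
    + pF R i v b false * \sum_(j < n) pJ R i v b j * (swap v (rowM m b) i j == w)%:R)
  = (feasible w && colpar w i)%:R.
Proof.
have sM := special_rowM hm b; move: sM; set M := rowM m b => sM.
under eq_bigr do rewrite mulrDr.
rewrite big_split /=.
under eq_bigr do rewrite flip_eq mulrA.
rewrite sum_eq1.
under eq_bigr do rewrite big_distrr /= big_distrr /=.
rewrite exchange_big /=.
under eq_bigr => j _ do under eq_bigr do rewrite swap_eq !mulrA.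
under eq_bigr => j _ do rewrite sum_eq1.
rewrite -/M flipK colpar_flip eqxx negbK.
under eq_bigr => j _ do rewrite card_neq rowsum_swap feasible_swap !swap_tperm tpermL tpermR.
have hs := feas_rowsum sM.
case fw: (feasible w); last first.
  by rewrite /= mul0r mulr0 add0r big1 // => j _; rewrite !mul0r.
case ci: (colpar w i); last first.
  rewrite andbF /= mul0r add0r big1 // => j _.
  case: (eqVneq i j) => [<-|ij]; first by rewrite eqxx !mulr0 mul0r.
  rewrite colpar_swap // eqxx ci /=.
  by case: (w (M,i) != w (M,j)) => /=; rewrite !(mul0r, mulr0).
rewrite /= (feas_flip i sM fw) //.
pose X := (1 - (if ~~ w (M, i) then rowsum w M == m.+1 else rowsum w M == m)%:R / m.+1%:R)
   / (if ~~ w (M, i) then (n - rowsum w M)%N else rowsum w M)%:R : R.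
under eq_bigr => j _.
  rewrite (_ : _ * _ = (w (M, j) != w (M, i))%:R * X); first over.
  rewrite (feas_flip (e := swap w M i j) i sM fw); last by move=> r; rewrite rowsum_swap.
  rewrite swap_tperm tpermL /X.
  case: (eqVneq i j) => [<-|ij]; first by rewrite eqxx !(mul0r, mulr0).
  rewrite colpar_swap // eqxx ci /=.
  by case: (w (M, i)); case: (w (M, j)) => /=; rewrite ?(mul0r, mulr0, mul1r, mulr1).
rewrite -big_distrl /= sum_ind card_neq /X.
have e1 : (m == m.+1) = false by rewrite eqn_leq ltnn andbF.
have e2 : (m.+1 == m) = false by rewrite eqn_leq ltnn.
have n1 : (n - m = m.+1)%N by rewrite /nbulbs; lia.
have n2 : (n - m.+1 = m)%N by rewrite /nbulbs; lia.
have hm0 : (m%:R : R) != 0 by rewrite pnatr_eq0 -lt0n.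
have hm1' : (m%:R + 1 : R) != 0 by rewrite -(natrD R m 1) addn1 pnatr_eq0.
move: (w (M, i)) (hs w fw) => a /orP [] /eqP ->;
  rewrite !eqxx ?e1 ?e2 ?n1 ?n2; case: a => /=;
  rewrite -?[m.+1]addn1 ?natrD; field; rewrite ?hm0 ?hm1' //.
Qed.


Lemma sumL1 (a d : R) (p : 'I_n -> R) :
  \sum_(j < n) a * p j * d = a * d * \sum_(j < n) p j.
Proof. by rewrite big_distrr /=; apply: eq_bigr => j _; ring. Qed.
Lemma sumL2 (a : R) (p d : 'I_n -> R) :
  \sum_(j < n) a * p j * d j = a * \sum_(j < n) p j * d j.
Proof. by rewrite big_distrr /=; apply: eq_bigr => j _; ring. Qed.

Lemma halfhalf : 2^-1 + 2^-1 = 1 :> R.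
Proof. by field. Qed.

Lemma sum_pJ (hm : (0 < m)%N) i (v : arr m) b : feasible v ->
  \sum_(j < n) pJ R i v b j = 1.
Proof.
move=> fv; rewrite /pJ -big_distrl /= sum_ind mulfV // card_neq pnatr_eq0.
have := feas_rowsum (special_rowM hm b) fv.
case: (v _) => /orP [] /eqP ->; rewrite /nbulbs; lia.
Qed.

Lemma sum_pF i (v : arr m) b : \sum_(f : bool) pF R i v b f = 1.
Proof. by rewrite big_bool /= /pF addrC subrK. Qed.

Lemma inner_val (hm : (0 < m)%N) i (v w : arr m) : feasible v ->
  \sum_(b : bool) \sum_(f : bool) \sum_(j < n)
     2^-1 * pF R i v b f * pJ R i v b j * (Vi i v b f j == w)%:R
  = if colpar v i then (v == w)%:R else
    \sum_(b : bool) 2^-1 *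
      (pF R i v b true * (flip v (rowM m b) i == w)%:R
       + pF R i v b false * \sum_(j < n) pJ R i v b j * (swap v (rowM m b) i j == w)%:R).
Proof.
move=> fv; rewrite /Vi; case: (colpar v i).
  transitivity (\sum_(b : bool) ((v == w)%:R * 2^-1) *
     ((\sum_(f : bool) pF R i v b f) * (\sum_(j < n) pJ R i v b j))).
    apply: eq_bigr => b _; rewrite big_distrlr big_distrr /=; apply: eq_bigr => f _.
    by rewrite big_distrr /=; apply: eq_bigr => j _; ring.
  under eq_bigr do rewrite sum_pF sum_pJ // !mulr1.
  by rewrite -big_distrr /= big_bool /= halfhalf mulr1.
apply: eq_bigr => b _; rewrite big_bool /= sumL1 sum_pJ // sumL2; ring.
Qed.

Lemma K1 (hm : (0 < m)%N) i (w : arr m) :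
  \sum_(v : arr m) (feasible v)%:R *
    (\sum_(b : bool) \sum_(f : bool) \sum_(j < n)
     2^-1 * pF R i v b f * pJ R i v b j * (Vi i v b f j == w)%:R)
  = 2 * (feasible w && colpar w i)%:R.
Proof.
transitivity (\sum_(v : arr m) ((feasible v && colpar v i)%:R * (v == w)%:R
  + \sum_(b : bool) 2^-1 * ((feasible v && ~~ colpar v i)%:R *
      (pF R i v b true * (flip v (rowM m b) i == w)%:R
       + pF R i v b false * \sum_(j < n) pJ R i v b j * (swap v (rowM m b) i j == w)%:R)))).
  apply: eq_bigr => v _; case fv: (feasible v); last first.
    by rewrite /= !mul0r add0r big1 // => b _; rewrite mul0r mulr0.
  rewrite inner_val // /=; case: (colpar v i) => /=.
    by rewrite mul1r big1 ?addr0 // => b _; rewrite mul0r mulr0.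
  by rewrite mul0r add0r mul1r; apply: eq_bigr => b _; rewrite mul1r.
rewrite big_split /= sum_eq1 exchange_big /=.
under eq_bigr do rewrite -big_distrr /= Lb //.
rewrite -big_distrl /= big_bool /= halfhalf mul1r; ring.
Qed.

End Comb.

Section PV.
Variable m : nat.
Local Notation n := (nbulbs m).
Variable R : realFieldType.
Local Notation rm := (row_m m).
Local Notation rm1 := (row_m1 m).

Lemma mkVE (x : arr m) bm cm bm1 cm1 p : mkV x bm cm bm1 cm1 p =
  if p == (rm, bm) then cm else if p == (rm1, bm1) then cm1 else x p.
Proof. by rewrite ffunE. Qed.

Lemma mkV_at1 (x : arr m) bm cm bm1 cm1 : mkV x bm cm bm1 cm1 (rm, bm) = cm.
Proof. by rewrite mkVE eqxx. Qed.

Lemma mkV_at2 (hm : (0 < m)%N) (x : arr m) bm cm bm1 cm1 :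
  mkV x bm cm bm1 cm1 (rm1, bm1) = cm1.
Proof.
by rewrite mkVE xpair_eqE eq_sym (negPf (row_m_neq hm)) eqxx.
Qed.

Lemma mkV_swap (x v : arr m) bm bm1 :
  (v == mkV x bm (v (rm, bm)) bm1 (v (rm1, bm1))) =
  (x == mkV v bm (x (rm, bm)) bm1 (x (rm1, bm1))).
Proof.
apply/eqP/eqP => h; apply/ffunP => p; rewrite mkVE.
  case: eqP => [->//|h1]; case: eqP => [->//|h2].
  by rewrite h mkVE; move/eqP/negPf: h1 => ->; move/eqP/negPf: h2 => ->.
case: eqP => [->//|h1]; case: eqP => [->//|h2].
by rewrite h mkVE; move/eqP/negPf: h1 => ->; move/eqP/negPf: h2 => ->.
Qed.

Lemma sum_bool_at (F : bool -> R) c0 : (forall c, c != c0 -> F c = 0) ->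
  \sum_(c : bool) F c = F c0.
Proof.
move=> h; rewrite big_bool /=; case: c0 h => h.
  by rewrite [F false]h ?addr0.
by rewrite [F true]h ?add0r.
Qed.

Lemma I1 (hm : (0 < m)%N) (x v : arr m) bm bm1 :
  \sum_(cm : bool) \sum_(cm1 : bool) (v == mkV x bm cm bm1 cm1)%:R
  = \sum_(a : bool) \sum_(a' : bool) (x == mkV v bm a bm1 a')%:R :> R.
Proof.
rewrite (sum_bool_at (c0 := v (rm, bm))); last first.
  move=> c hc; apply: big1 => c1 _; case: eqP => // h.
  by move: hc; rewrite h mkV_at1 eqxx.
rewrite (sum_bool_at (c0 := v (rm1, bm1))); last first.
  move=> c hc; case: eqP => // h.
  by move: hc; rewrite h mkV_at2 // eqxx.
rewrite (sum_bool_at (c0 := x (rm, bm))); last first.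
  move=> c hc; apply: big1 => c1 _; case: eqP => // h.
  by move: hc; rewrite h mkV_at1 eqxx.
rewrite (sum_bool_at (c0 := x (rm1, bm1))); last first.
  move=> c hc; case: eqP => // h.
  by move: hc; rewrite h mkV_at2 // eqxx.
by rewrite mkV_swap.
Qed.


Lemma pV_step2 (hm : (0 < m)%N) (v : arr m) : pV R v =
  \sum_(bm < n) \sum_(bm1 < n) \sum_(a : bool) \sum_(a' : bool)
    pX R (mkV v bm a bm1 a') * pBm R (mkV v bm a bm1 a') bm
      * pBm1 R (mkV v bm a bm1 a') bm1 * (2^-1 * 2^-1).
Proof.
rewrite /pV.
transitivity (\sum_(x : arr m) \sum_(bm < n) \sum_(bm1 < n) \sum_(a : bool) \sum_(a' : bool)
   (pX R x * pBm R x bm * pBm1 R x bm1 * (2^-1 * 2^-1)) * (x == mkV v bm a bm1 a')%:R).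
  apply: eq_bigr => x _; apply: eq_bigr => bm _; apply: eq_bigr => bm1 _.
  under eq_bigr do rewrite -big_distrr /=.
  rewrite -big_distrr /= I1 // big_distrr /=; apply: eq_bigr => a _.
  by rewrite big_distrr.
rewrite exchange_big; apply: eq_bigr => bm _.
rewrite exchange_big; apply: eq_bigr => bm1 _.
rewrite exchange_big; apply: eq_bigr => a _.
rewrite exchange_big; apply: eq_bigr => a' _.
by rewrite sum_eq1.
Qed.


Lemma pV_step3 (hm : (0 < m)%N) (v : arr m) : pV R v =
  \sum_(bm < n) \sum_(bm1 < n)
    pX R (mkV v bm false bm1 true)
     * (#|[set k | ~~ mkV v bm false bm1 true (rm, k)]|%:R)^-1
     * (#|[set k | mkV v bm false bm1 true (rm1, k)]|%:R)^-1 * (2^-1 * 2^-1).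
Proof.
rewrite pV_step2 //; apply: eq_bigr => bm _; apply: eq_bigr => bm1 _.
rewrite (sum_bool_at (c0 := false)); last first.
  case=> // _; apply: big1 => a' _.
  by rewrite /pBm mkV_at1 /= !(mul0r, mulr0).
rewrite (sum_bool_at (c0 := true)); last first.
  case=> // _.
  by rewrite /pBm1 mkV_at2 //= !(mul0r, mulr0).
by rewrite /pBm /pBm1 mkV_at1 mkV_at2 //= !mul1r.
Qed.

Lemma rowsum_mkV_other (v : arr m) bm a bm1 a' r : r != rm -> r != rm1 ->
  rowsum (mkV v bm a bm1 a') r = rowsum v r.
Proof.
move=> h1 h2; rewrite /rowsum; apply: eq_bigr => k _.
by rewrite mkVE !xpair_eqE (negPf h1) (negPf h2).
Qed.

Lemma rowsum_mkV1 (hm : (0 < m)%N) (v : arr m) bm bm1 a' :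
  rowsum (mkV v bm false bm1 a') rm = (rowsum v rm - v (rm, bm))%N.
Proof.
rewrite /rowsum (bigD1 bm) //= [in RHS](bigD1 bm) //= mkV_at1.
have ne := row_m_neq hm.
under eq_bigr => k hk do rewrite mkVE !xpair_eqE eqxx (negPf hk) (negPf ne) /=.
by case: (v _) => /=; lia.
Qed.

Lemma rowsum_mkV2 (hm : (0 < m)%N) (v : arr m) bm bm1 :
  rowsum (mkV v bm false bm1 true) rm1 = (rowsum v rm1 + ~~ v (rm1, bm1))%N.
Proof.
rewrite /rowsum (bigD1 bm1) //= [in RHS](bigD1 bm1) //= mkV_at2 //.
have ne := row_m_neq hm; rewrite eq_sym in ne.
under eq_bigr => k hk do rewrite mkVE !xpair_eqE eqxx (negPf hk) (negPf ne) /=.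
by case: (v _) => /=; lia.
Qed.

Lemma card_true (e : arr m) M : #|[set k | e (M, k)]| = rowsum e M.
Proof. by rewrite /rowsum sum_card. Qed.

Lemma card_not (e : arr m) M : #|[set k | ~~ e (M, k)]| = (n - rowsum e M)%N.
Proof.
rewrite -(card_neq e M true); apply: eq_card => k; rewrite !inE.
by case: (e _).
Qed.

Lemma sum_split_bool (b : 'I_n -> bool) (F : bool -> R) :
  \sum_(k < n) F (b k) =
  #|[set k | b k]|%:R * F true + #|[set k | ~~ b k]|%:R * F false.
Proof.
rewrite -!sum_ind !big_distrl -big_split /=; apply: eq_bigr => k _.
by case: (b k); rewrite /= ?(mul0r, mul1r, addr0, add0r).
Qed.


Lemma rowsum_le (e : arr m) M : (rowsum e M <= n)%N.
Proof. by rewrite -card_true; apply: leq_trans (max_card _) _; rewrite card_ord. Qed.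

Lemma prod_split (hm : (0 < m)%N) (F : 'I_n -> R) :
  \prod_(r < n) F r = F rm * F rm1 * \prod_(r < n | (r != rm) && (r != rm1)) F r.
Proof.
rewrite (bigD1 rm) //= (bigD1 rm1) /=; last by rewrite eq_sym row_m_neq.
by rewrite mulrA; congr (_ * _); apply: eq_bigl => r; rewrite andbC.
Qed.

Lemma feas_prod (v : arr m) :
  (feasible v)%:R = \prod_(r < n) (cond r (rowsum v r))%:R :> R.
Proof.
case fv: (feasible v).
  rewrite big1 // => r _; move: fv; rewrite feasibleE => /forallP /(_ r).
  by rewrite /cond /special => ->.
move: fv; rewrite feasibleE => /negbT; rewrite negb_forall => /existsP [r hr].
by rewrite (bigD1 r) //= (negPf hr) mul0r.
Qed.

Lemma not_special (hm : (0 < m)%N) r : r != rm -> r != rm1 -> special r = false.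
Proof.
move=> h1 h2; rewrite /special.
apply/negbTE/negP => /orP [] /eqP h.
  by move/eqP: h1; apply; apply: val_inj; rewrite /= val_row_m //; lia.
by move/eqP: h2; apply; apply: val_inj; rewrite /= val_row_m1; lia.
Qed.

Lemma Sf (hm : (0 < m)%N) (v : arr m) :
  \sum_(bm < n) ((rowsum v rm - v (rm, bm) == m)%N%:R
                  / (n - (rowsum v rm - v (rm, bm)))%N%:R)
  = ((rowsum v rm == m) || (rowsum v rm == m.+1))%:R :> R.
Proof.
rewrite (sum_split_bool (fun k => v (rm, k))
   (fun c => ((rowsum v rm - c == m)%N%:R / (n - (rowsum v rm - c))%N%:R))).
rewrite card_true card_not /=.
move: (rowsum v rm) (rowsum_le v rm) => s; rewrite /nbulbs => sle.
have hm1' : (m%:R + 1 : R) != 0 by rewrite -(natrD R m 1) addn1 pnatr_eq0.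
case: (eqVneq s m) => [->|h1]; [|case: (eqVneq s m.+1) => [->|h2]].
- have -> : (m - 1 == m)%N = false by apply/eqP; lia.
  rewrite subn0 eqxx (_ : (m.*2.+1 - m = m + 1)%N); last by lia.
  rewrite /= ?mulr0n ?mulr1n natrD mul0r mulr0 add0r mul1r mulfV //.
- have -> : (m.+1 - 1 == m)%N = true by apply/eqP; lia.
  rewrite (_ : (m.*2.+1 - (m.+1 - 1) = m + 1)%N); last by lia.
  rewrite subn0 eqn_leq ltnn /= ?mulr0n ?mulr1n mul0r mulr0 addr0 mul1r -addn1 natrD mulfV //.
- have -> : (s - 1 == m)%N = false by apply/eqP; lia.
  by rewrite subn0 (negPf h1) /= ?mulr0n !(mul0r, mulr0, addr0).
Qed.

Lemma Sg (hm : (0 < m)%N) (v : arr m) :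
  \sum_(bm1 < n) ((rowsum v rm1 + ~~ v (rm1, bm1) == m.+1)%N%:R
                  / (rowsum v rm1 + ~~ v (rm1, bm1))%N%:R)
  = ((rowsum v rm1 == m) || (rowsum v rm1 == m.+1))%:R :> R.
Proof.
rewrite (sum_split_bool (fun k => v (rm1, k))
   (fun c => ((rowsum v rm1 + ~~ c == m.+1)%N%:R / (rowsum v rm1 + ~~ c)%N%:R))).
rewrite card_true card_not /=.
move: (rowsum v rm1) (rowsum_le v rm1) => s; rewrite /nbulbs => sle.
have hm1' : (m%:R + 1 : R) != 0 by rewrite -(natrD R m 1) addn1 pnatr_eq0.
have hm0 : (m%:R : R) != 0 by rewrite pnatr_eq0 -lt0n.
have hm2 : (m%:R + 1 + 1 : R) != 0.
  by rewrite -(natrD R m 1) -(natrD R _ 1) !addn1 pnatr_eq0.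
case: (eqVneq s m) => [->|h1]; [|case: (eqVneq s m.+1) => [->|h2]].
- rewrite addn0 addn1 eqxx (eqn_leq m) ltnn andbF (_ : (m.*2.+1 - m = m + 1)%N); last by lia.
  rewrite /= ?mulr0n ?mulr1n -?[m.+1]addn1 !natrD ?mulr1n; field; rewrite ?hm0 ?hm1' ?hm2 //.
- rewrite addn0 eqxx (_ : (m.+1 + 1 == m.+1) = false); last by apply/eqP; lia.
  rewrite (_ : (m.*2.+1 - m.+1 = m)%N); last by lia.
  rewrite /= ?mulr0n ?mulr1n -?[m.+1]addn1 !natrD ?mulr1n; field; rewrite ?hm0 ?hm1' ?hm2 //.
- rewrite addn0 addn1 eqSS (negPf h1) (negPf h2) /= ?mulr0n.
  by rewrite !(mul0r, mulr0, addr0).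
Qed.


Definition Kc : R := 2^-1 * 2^-1 * \prod_(r < n) ('C(n, r.+1)%:R)^-1.

Lemma pV_formula (hm : (0 < m)%N) (v : arr m) : pV R v = (feasible v)%:R * Kc.
Proof.
pose restv := \prod_(r < n | (r != rm) && (r != rm1)) ((rowsum v r == r.+1)%:R : R).
pose f := fun bm : 'I_n => ((rowsum v rm - v (rm, bm) == m)%N%:R
                  / (n - (rowsum v rm - v (rm, bm)))%N%:R : R).
pose g := fun bm1 : 'I_n => ((rowsum v rm1 + ~~ v (rm1, bm1) == m.+1)%N%:R
                  / (rowsum v rm1 + ~~ v (rm1, bm1))%N%:R : R).
have vrm : (row_m m).+1 = m by rewrite val_row_m // prednK.
have vrm1 : (row_m1 m).+1 = m.+1 by rewrite val_row_m1.
rewrite pV_step3 //.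
transitivity (\sum_(bm < n) \sum_(bm1 < n) (Kc * restv) * (f bm * g bm1)).
  apply: eq_bigr => bm _; apply: eq_bigr => bm1 _.
  rewrite /pX big_split /= prod_split // card_not card_true.
  rewrite rowsum_mkV1 // rowsum_mkV2 // vrm vrm1.
  have -> : \prod_(r < n | (r != rm) && (r != rm1))
      ((rowsum (mkV v bm false bm1 true) r == r.+1)%:R : R) = restv.
    by apply: eq_bigr => r /andP [h1 h2]; rewrite rowsum_mkV_other.
  rewrite /Kc /f /g; ring.
under eq_bigr do rewrite -big_distrr /=.
rewrite -big_distrr /= -big_distrlr /= Sf // Sg //.
rewrite feas_prod prod_split //.
have srm : special rm := special_rowM hm false.
have srm1 : special rm1 := special_rowM hm true.
rewrite /cond srm srm1.
have -> : \prod_(r < n | (r != rm) && (r != rm1))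
   ((if special r then (rowsum v r == m) || (rowsum v r == m.+1)
     else rowsum v r == r.+1)%:R : R) = restv.
  by apply: eq_bigr => r /andP [h1 h2]; rewrite not_special.
ring.
Qed.

End PV.

Section Count.
Variable m : nat.
Local Notation n := (nbulbs m).
Variable R : realFieldType.

Definition currify (v : arr m) : {ffun 'I_n -> {ffun 'I_n -> bool}} :=
  [ffun r => [ffun j => v (r, j)]].
Definition uncurrify (f : {ffun 'I_n -> {ffun 'I_n -> bool}}) : arr m :=
  [ffun p => f p.1 p.2].

Lemma currify_bij : bijective currify.
Proof.
exists uncurrify => [v|f]; apply/ffunP.
  by move=> [r j]; rewrite !ffunE.
by move=> r; apply/ffunP => j; rewrite !ffunE.
Qed.

Lemma factor (F : 'I_n -> {ffun 'I_n -> bool} -> R) :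
  \sum_(v : arr m) \prod_(r < n) F r [ffun j => v (r, j)]
  = \prod_(r < n) \sum_(y : {ffun 'I_n -> bool}) F r y.
Proof.
rewrite bigA_distr_bigA /= (reindex currify (onW_bij _ currify_bij)) /=.
by apply: eq_bigr => v _; apply: eq_bigr => r _; rewrite /currify ffunE.
Qed.

Lemma count_k k :
  \sum_(y : {ffun 'I_n -> bool}) ((\sum_(j < n) y j)%N == k)%:R = 'C(n, k)%:R :> R.
Proof.
pose h := fun A : {set 'I_n} => [ffun j => j \in A].
have hb : bijective h.
  exists (fun y : {ffun 'I_n -> bool} => [set j | y j]) => [A|y].
    by apply/setP => j; rewrite inE ffunE.
  by apply/ffunP => j; rewrite ffunE inE.
rewrite (reindex h (onW_bij _ hb)) /=.
rewrite (eq_bigr (fun A : {set 'I_n} => (#|A| == k)%:R)); last first.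
  move=> A _; congr ((_ == _)%:R); rewrite sum_card; apply: eq_card => j.
  by rewrite inE ffunE.
by rewrite sum_ind card_draws card_ord.
Qed.

Lemma total (hm : (0 < m)%N) : \sum_(v : arr m) (feasible v)%:R * Kc m R = 1.
Proof.
rewrite -big_distrl /=.
under eq_bigr => v _ do rewrite feas_prod.
have -> : \sum_(v : arr m) \prod_(r < n) ((cond r (rowsum v r))%:R : R)
   = \sum_(v : arr m) \prod_(r < n) ((cond r (\sum_(j < n) [ffun j => v (r, j)] j))%:R : R).
  apply: eq_bigr => v _; apply: eq_bigr => r _; congr ((cond _ _)%:R).
  by rewrite /rowsum; apply: eq_bigr => j _; rewrite ffunE.
rewrite (factor (fun r y => ((cond r (\sum_(j < n) y j))%:R : R))).
rewrite /Kc mulrC -!mulrA -big_split /=.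
rewrite prod_split //.
have srm : special (row_m m) := special_rowM hm false.
have srm1 : special (row_m1 m) := special_rowM hm true.
have vrm : (row_m m).+1 = m by rewrite val_row_m // prednK.
have vrm1 : (row_m1 m).+1 = m.+1 by rewrite val_row_m1.
have Cn0 : 'C(n, m)%:R != 0 :> R by rewrite pnatr_eq0 -lt0n bin_gt0 /nbulbs; lia.
have Csym : 'C(n, m.+1) = 'C(n, m).
  by rewrite -bin_sub /nbulbs; [congr 'C(_, _); lia | lia].
have two : forall r : 'I_n, special r ->
   \sum_(y : {ffun 'I_n -> bool}) ((cond r (\sum_(j < n) y j))%:R : R) = 2 * 'C(n, m)%:R.
  move=> r sr; rewrite /cond sr.
  transitivity (\sum_(y : {ffun 'I_n -> bool}) ((\sum_(j < n) y j == m)%N%:R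
      + (\sum_(j < n) y j == m.+1)%N%:R : R)).
    apply: eq_bigr => y _; case: (eqVneq (\sum_(j < n) y j)%N m) => [->|h] /=.
      by rewrite (_ : (m == m.+1) = false) ?mulr0n ?addr0 //; apply/eqP; lia.
    by rewrite mulr0n add0r.
  by rewrite big_split /= !count_k Csym; ring.
rewrite [\prod_(r < n | _) _]big1 ?mulr1; last first.
  move=> r /andP [h1 h2]; rewrite /cond not_special //.
  rewrite count_k mulVf // pnatr_eq0 -lt0n bin_gt0; exact: ltn_ord.
by rewrite !two // vrm vrm1 Csym; field.
Qed.

End Count.

Section Main.
Variable m : nat.
Local Notation n := (nbulbs m).
Variable R : realFieldType.
Hypothesis hm : (0 < m)%N.

Lemma inner_tot i (v : arr m) : feasible v ->
  \sum_(b : bool) \sum_(f : bool) \sum_(j < n) 2^-1 * pF R i v b f * pJ R i v b j = 1.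
Proof.
move=> fv.
transitivity (\sum_(b : bool) 2^-1 * ((\sum_(f : bool) pF R i v b f) * (\sum_(j < n) pJ R i v b j))).
  apply: eq_bigr => b _; rewrite big_distrlr big_distrr /=; apply: eq_bigr => f _.
  by rewrite big_distrr /=; apply: eq_bigr => j _; ring.
under eq_bigr do rewrite sum_pF sum_pJ // !mulr1.
by rewrite big_bool /= halfhalf.
Qed.

Lemma sum_ind1 (T : finType) (y : T) : \sum_(w : T) (y == w)%:R = 1 :> R.
Proof.
rewrite (bigD1 y) //= eqxx big1 ?addr0 // => w hw.
by rewrite eq_sym (negPf hw).
Qed.

Lemma natr_andb (a b : bool) : ((a && b)%:R : R) = a%:R * b%:R.
Proof. by case: a; case: b; rewrite /= ?(mulr1n, mulr0n, mul1r, mul0r). Qed.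

Lemma Dhalf i : \sum_(v : arr m) pV R v * (colpar v i)%:R = 2^-1.
Proof.
have h1 : \sum_(v : arr m) (feasible v)%:R = 2 * \sum_(v : arr m) (feasible v && colpar v i)%:R :> R.
  rewrite big_distrr /=.
  under [RHS]eq_bigr => w _ do rewrite -(@K1 m R hm i w).
  rewrite exchange_big /=; apply: congr_big => // v _.
  rewrite -big_distrr /=.
  case fv: (feasible v); last by rewrite !mul0r.
  rewrite mul1r -[LHS](inner_tot i fv).
  rewrite [RHS]exchange_big /=; apply: eq_bigr => b _; rewrite [RHS]exchange_big /=; apply: eq_bigr => f _.
  rewrite [RHS]exchange_big /=; apply: eq_bigr => j _.
  by rewrite -big_distrr /= sum_ind1 mulr1.
have h2 := total R hm.
rewrite -big_distrl /= in h2.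
have -> : \sum_(v : arr m) pV R v * (colpar v i)%:R
        = Kc m R * \sum_(v : arr m) (feasible v && colpar v i)%:R.
  rewrite big_distrr /=; apply: eq_bigr => v _.
  by rewrite pV_formula // natr_andb; ring.
move: h2; rewrite h1 => h2.
rewrite (_ : Kc m R * _ = 2^-1 * (2 * (\sum_(v : arr m) (feasible v && colpar v i)%:R) * Kc m R)).
  by rewrite h2 mulr1.
by field.
Qed.


Lemma part1 i (w : arr m) :
  \sum_(v : arr m) \sum_(b : bool) \sum_(f : bool) \sum_(j < n)
      pjoint R i v b f j * (Vi i v b f j == w)%:R
  = pV R w * (colpar w i)%:R / \sum_(v : arr m) pV R v * (colpar v i)%:R.
Proof.
rewrite Dhalf.
transitivity (Kc m R * \sum_(v : arr m) (feasible v)%:R *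
    (\sum_(b : bool) \sum_(f : bool) \sum_(j < n)
     2^-1 * pF R i v b f * pJ R i v b j * (Vi i v b f j == w)%:R)).
  rewrite big_distrr /=; apply: eq_bigr => v _.
  rewrite mulrA big_distrr /=; apply: eq_bigr => b _.
  rewrite big_distrr /=; apply: eq_bigr => f _.
  rewrite big_distrr /=; apply: eq_bigr => j _.
  by rewrite /pjoint pV_formula //; ring.
by rewrite K1 // pV_formula // natr_andb; field.
Qed.

Lemma sum_eq1' (T : finType) (F : T -> R) (y : T) :
  \sum_(x : T) F x * (y == x)%:R = F y.
Proof.
by rewrite -(sum_eq1 F y); apply: eq_bigr => x _; rewrite eq_sym.
Qed.

Lemma part2_i (g : nat -> R) i :
  \sum_(w : arr m) pV R w * (colpar w i)%:R * g (Vtot w)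
  = 2^-1 * \sum_(v : arr m) \sum_(b : bool) \sum_(f : bool) \sum_(j < n)
               pjoint R i v b f j * g (Vtot (Vi i v b f j)).
Proof.
transitivity (\sum_(w : arr m) 2^-1 *
  (\sum_(v : arr m) \sum_(b : bool) \sum_(f : bool) \sum_(j < n)
      pjoint R i v b f j * (Vi i v b f j == w)%:R) * g (Vtot w)).
  apply: eq_bigr => w _; rewrite part1 Dhalf; congr (_ * _).
  by field.
under eq_bigr do rewrite -mulrA.
rewrite -big_distrr /=; congr (_ * _).
under eq_bigr => w _ do rewrite big_distrl /=.
rewrite exchange_big /=; apply: eq_bigr => v _.
under eq_bigr => w _ do rewrite big_distrl /=.
rewrite exchange_big /=; apply: eq_bigr => b _.
under eq_bigr => w _ do rewrite big_distrl /=.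
rewrite exchange_big /=; apply: eq_bigr => f _.
under eq_bigr => w _ do rewrite big_distrl /=.
rewrite exchange_big /=; apply: eq_bigr => j _.
under eq_bigr => w _ do rewrite mulrAC.
by rewrite (sum_eq1' (fun w => pjoint R i v b f j * g (Vtot w))).
Qed.

Lemma part2 (g : nat -> R) :
  \sum_(v : arr m) pV R v * (Vtot v)%:R * g (Vtot v)
  = (\sum_(v : arr m) pV R v * (Vtot v)%:R)
    * (\sum_(i < n) n%:R^-1 *
         \sum_(v : arr m) \sum_(b : bool) \sum_(f : bool) \sum_(j < n)
            pjoint R i v b f j * g (Vtot (Vi i v b f j))).
Proof.
have EV : \sum_(v : arr m) pV R v * (Vtot v)%:R = n%:R * 2^-1.
  under eq_bigr => v _ do rewrite /Vtot natr_sum big_distrr /=.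
  rewrite exchange_big /=.
  under eq_bigr => i _ do rewrite Dhalf.
  by rewrite sumr_const card_ord mulr_natl.
rewrite EV.
under eq_bigr => v _ do rewrite /Vtot natr_sum big_distrr big_distrl /=.
rewrite exchange_big /=.
under eq_bigr => i _ do rewrite part2_i.
rewrite big_distrr /=; apply: eq_bigr => i _.
have n0 : (n%:R : R) != 0 by rewrite pnatr_eq0.
by field.
Qed.

End Main.

Unset Implicit Arguments.

Theorem theorem3p2 (R : realFieldType) (m : nat) (hm : (0 < m)%N) :
  (* L(V^i) = L(V | V_i = 1) *)
  (forall (i : 'I_(nbulbs m)) (w : arr m),
     \sum_(v : arr m) \sum_(b : bool) \sum_(f : bool) \sum_(j < nbulbs m)
        pjoint R i v b f j * (Vi i v b f j == w)%:R
     = pV R w * (colpar w i)%:R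
       / \sum_(v : arr m) pV R v * (colpar v i)%:R)
  /\
  (* V^s = V^I (I uniform, independent) has the V-size bias distribution *)
  (forall g : nat -> R,
     \sum_(v : arr m) pV R v * (Vtot v)%:R * g (Vtot v)
     = (\sum_(v : arr m) pV R v * (Vtot v)%:R)
       * (\sum_(i < nbulbs m) (nbulbs m)%:R^-1 *
            \sum_(v : arr m) \sum_(b : bool) \sum_(f : bool) \sum_(j < nbulbs m)
               pjoint R i v b f j * g (Vtot (Vi i v b f j))))
  /\
  (* almost surely (every outcome (I,V,M,F,J) of positive probability):
     V^s - V = 1{V_I=0,F=1} + 2 1{V_I=0,V_J=0,F=0} and V <= V^s <= V+2 *)
  (forall (i : 'I_(nbulbs m)) (v : arr m) (b f : bool) (j : 'I_(nbulbs m)),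
     pjoint R i v b f j != 0 ->
     [/\ Vtot (Vi i v b f j)
           = (Vtot v + (~~ colpar v i && f)
              + 2 * (~~ colpar v i && ~~ colpar v j && ~~ f))%N,
         (Vtot v <= Vtot (Vi i v b f j))%N
       & (Vtot (Vi i v b f j) <= Vtot v + 2)%N]).
Proof.
split; first by move=> i w; exact: (part1 R hm i w).
split; first by move=> g; exact: (part2 hm g).
by move=> i v b f j; exact: part3.
Qed.
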